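(* Any rule defined on $\mathcal{E}_{\mathcal{SP}}$ that satisfies own-peak-onliness, peak responsiveness, and not obvious manipulability (NOM) meets the equal division guarantee.
   Context: Let $N=\{1,\dots,n\}$ be a finite set of agents. A preference $R_i$ is a continuous complete preorder on $\mathbb{R}_+\cup\{\infty\}$ ($P_i$ strict, $I_i$ indifference); its peak $p(R_i)$ is the set of maximal elements. $R_i$ is single-peaked if $p(R_i)$ is a singleton (identified with its element, possibly $\infty$) and for $x,x'\in\mathbb{R}_+$, $xP_ix'$ whenever $x'<x\le p(R_i)$ or $p(R_i)\le x<x'$; $\mathcal{SP}$ is the set of these. An economy is $(R,\Omega)$, $R\in\mathcal{SP}^n$, $\Omega>0$; $\mathcal{E}_{\mathcal{SP}}$ is the set of economies; a rule is a map $\varphi:\mathcal{E}_{\mathcal{SP}}\to\mathbb{R}^n_+$ with $\sum_j\varphi_j(R,\Omega)=\Omega$. Own-peak-onliness: $p(R_i')=p(R_i)$ implies $\varphi_i(R,\Omega)=\varphi_i(R_i',R_{-i},\Omega)$. Peak responsiveness: for $i\ne j$, $p(R_i)\le p(R_j)$ implies $\varphi_i(R,\Omega)\le\varphi_j(R,\Omega)$. Equal division guarantee: $p(R_i)=\Omega/n$ implies $\varphi_i(R,\Omega)I_i\Omega/n$. Option set $O^\varphi(R_i,\Omega)=\{\varphi_i(R_i,R_{-i},\Omega):R_{-i}\in\mathcal{SP}^{n-1}\}$; $R_i'$ is a manipulation at $(R_i,\Omega)$ if $\varphi_i(R_i',R_{-i},\Omega)P_i\varphi_i(R_i,R_{-i},\Omega)$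 for some $R_{-i}$, and an obvious manipulation if moreover each $x'\in O^\varphi(R_i',\Omega)$ satisfies $x'P_ix$ for some $x\in O^\varphi(R_i,\Omega)$; NOM means no obvious manipulation exists. *)

(* Defs.v *)
From HB Require Import structures.
From mathcomp Require Import all_boot all_order all_algebra.
From mathcomp Require Import all_classical all_reals all_analysis.
Set Implicit Arguments. Unset Strict Implicit. Unset Printing Implicit Defensive.
Import Order.TTheory GRing.Theory Num.Theory.
Local Open Scope classical_set_scope.
Local Open Scope ring_scope.

Section Defs.
Variable R : realType.

Definition cdom (x : \bar R) : Prop := (0 <= x)%E.

(* A (weak) preference relation: x R y means "x is at least as good as y". *)
Definition prel := \bar R -> \bar R -> Prop.

(* Continuous complete preorder on R_+ \cup {oo}.  Since cdom is closed in
   \bar R, relatively closed subsets of cdom are exactly the closed subsets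
   of \bar R contained in cdom. *)
Definition is_preference (Rel : prel) : Prop :=
  [/\ (forall x, cdom x -> Rel x x),
      (forall x y, cdom x -> cdom y -> Rel x y \/ Rel y x),
      (forall x y z, cdom x -> cdom y -> cdom z -> Rel x y -> Rel y z -> Rel x z),
      (forall y, cdom y -> closed [set x | cdom x /\ Rel x y]) &
      (forall y, cdom y -> closed [set x | cdom x /\ Rel y x])].

Definition strict (Rel : prel) x y : Prop := Rel x y /\ ~ Rel y x.
Definition indiff (Rel : prel) x y : Prop := Rel x y /\ Rel y x.

Definition peak (Rel : prel) : set (\bar R) :=
  [set x | cdom x /\ forall y, cdom y -> Rel x y].

Definition single_peaked (Rel : prel) : Prop :=
  is_preference Rel /\
  exists p : \bar R, peak Rel = [set p] /\
    forall x x' : R, 0 <= x' ->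
      ((x' < x /\ (x%:E <= p)%E) \/ ((p <= x%:E)%E /\ x < x')) ->
      strict Rel x%:E x'%:E.

Variable n : nat.

(* Preference profiles and rules (rules are arbitrary maps; only their values
   on economies in E_SP matter). *)
Definition profile := 'I_n -> prel.
Definition SPprofile (Rp : profile) : Prop := forall j, single_peaked (Rp j).

Definition upd (Rp : profile) (i : 'I_n) (Ri : prel) : profile :=
  fun j => if j == i then Ri else Rp j.

Definition is_rule (phi : profile -> R -> 'I_n -> R) : Prop :=
  forall Rp Om, SPprofile Rp -> 0 < Om ->
    (forall j, 0 <= phi Rp Om j) /\ \sum_(j < n) phi Rp Om j = Om.

Definition own_peak_only (phi : profile -> R -> 'I_n -> R) : Prop :=
  forall Rp Om i Ri', SPprofile Rp -> 0 < Om -> single_peaked Ri' ->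
    peak Ri' = peak (Rp i) -> phi Rp Om i = phi (upd Rp i Ri') Om i.

Definition peak_responsive (phi : profile -> R -> 'I_n -> R) : Prop :=
  forall Rp Om i j, SPprofile Rp -> 0 < Om -> i != j ->
    (forall a b, peak (Rp i) a -> peak (Rp j) b -> (a <= b)%E) ->
    phi Rp Om i <= phi Rp Om j.

Definition equal_division_guarantee (phi : profile -> R -> 'I_n -> R) : Prop :=
  forall Rp Om i, SPprofile Rp -> 0 < Om ->
    peak (Rp i) = [set (Om / n%:R)%:E] ->
    indiff (Rp i) (phi Rp Om i)%:E (Om / n%:R)%:E.

(* Option set O^phi(R_i, Om): R_{-i} ranges over single-peaked preferences of
   the agents j != i (coordinate i of Rp is overwritten by Ri). *)
Definition option_set (phi : profile -> R -> 'I_n -> R) (i : 'I_n) (Ri : prel)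
    (Om : R) : set R :=
  [set x | exists Rp : profile, (forall j, j != i -> single_peaked (Rp j)) /\
           x = phi (upd Rp i Ri) Om i].

Definition manipulation (phi : profile -> R -> 'I_n -> R) (i : 'I_n)
    (Ri Ri' : prel) (Om : R) : Prop :=
  exists Rp : profile, (forall j, j != i -> single_peaked (Rp j)) /\
    strict Ri (phi (upd Rp i Ri') Om i)%:E (phi (upd Rp i Ri) Om i)%:E.

Definition obvious_manipulation (phi : profile -> R -> 'I_n -> R) (i : 'I_n)
    (Ri Ri' : prel) (Om : R) : Prop :=
  manipulation phi i Ri Ri' Om /\
  forall x', option_set phi i Ri' Om x' ->
    exists2 x, option_set phi i Ri Om x & strict Ri x'%:E x%:E.

Definition NOM (phi : profile -> R -> 'I_n -> R) : Prop :=
  forall i Ri Ri' Om, single_peaked Ri -> single_peaked Ri' -> 0 < Om ->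
    ~ obvious_manipulation phi i Ri Ri' Om.

End Defs.

(* Main.v *)
Require Import Defs.
From mathcomp Require Import all_boot all_order all_algebra.
From mathcomp Require Import all_classical all_reals all_analysis.
From mathcomp Require Import lra.
Import Order.TTheory GRing.Theory Num.Theory.
Local Open Scope classical_set_scope.
Local Open Scope ring_scope.

Section Prefs.
Variable R : realType.

Definition topp : prel R := fun x y => (y <= x)%E.
Definition botp : prel R := fun x y => (x <= y)%E.

Lemma topp_sp : single_peaked topp.
Proof.
split.
  split.
  - by move=> x _; rewrite /topp.
  - by move=> x y _ _; rewrite /topp; case: (leP y x) => h; [left|right; exact: ltW].
  - by move=> x y z _ _ _ h1 h2; rewrite /topp; exact: le_trans h2 h1.
  - by move=> y _; apply: closedI; [exact: closed_ereal_le_ereal|exact: closed_ereal_le_ereal].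
  - by move=> y _; apply: closedI; [exact: closed_ereal_le_ereal|exact: closed_ereal_ge_ereal].
exists +oo%E; split.
  apply/seteqP; split => x /=.
    by move=> [_ /(_ +oo%E le0y)]; rewrite /topp leye_eq => /eqP.
  by move=> ->; split; [exact: le0y| move=> y _; exact: leey].
move=> x x' _ [[lt _]|[h _]].
  by rewrite /strict /topp !lee_fin; split; [exact: ltW|rewrite leNgt lt].
by move: h; rewrite leye_eq.
Qed.

Lemma botp_sp : single_peaked botp.
Proof.
split.
  split.
  - by move=> x _; rewrite /botp.
  - by move=> x y _ _; rewrite /botp; case: (leP x y) => h; [left|right; exact: ltW].
  - by move=> x y z _ _ _ h1 h2; rewrite /botp; exact: le_trans h1 h2.
  - by move=> y _; apply: closedI; [exact: closed_ereal_le_ereal|exact: closed_ereal_ge_ereal].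
  - by move=> y _; apply: closedI; [exact: closed_ereal_le_ereal|exact: closed_ereal_le_ereal].
exists 0%E; split.
  apply/seteqP; split => x /=.
    move=> [h0 /(_ 0%E (lexx _))]; rewrite /botp => h1.
    by apply/eqP; rewrite eq_le h1 h0.
  by move=> ->; split; [exact: lexx| move=> y; rewrite /cdom /botp].
move=> x x' h0 [[lt h]|[_ lt]].
  by move: h; rewrite lee_fin => h; have := lt_le_trans lt h; rewrite ltNge h0.
by rewrite /strict /botp !lee_fin; split; [exact: ltW|rewrite leNgt lt].
Qed.

Definition kfr (c p s : R) := if s <= p then c * (p - s) else s - p.
Lemma kfr_le (c p e d s : R) : 0 < c -> d = c * e -> 0 <= d ->
  (kfr c p s <= d) = (p - e <= s) && (s <= p + d).
Proof.
move=> c0 de d0; rewrite /kfr; case: (leP s p) => h.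
  apply/idP/andP.
    by move=> h1; split; apply/idP; nra.
  by case=> /idP h1 /idP h2; nra.
apply/idP/andP.
  by move=> h1; split; apply/idP; nra.
by case=> /idP h1 /idP h2; nra.
Qed.
Lemma kfr_ge (c p e d s : R) : 0 < c -> d = c * e -> 0 <= d ->
  (d <= kfr c p s) = (s <= p - e) || (p + d <= s).
Proof.
move=> c0 de d0; rewrite /kfr; case: (leP s p) => h.
  apply/idP/orP.
    by move=> h1; left; apply/idP; nra.
  by case=> /idP h1; nra.
apply/idP/orP.
  by move=> h1; right; apply/idP; nra.
by case=> /idP h1; nra.
Qed.

Definition kf (c p : R) (x : \bar R) : \bar R :=
  match x with
  | r%:E => (kfr c p r)%:E
  | _ => +oo%E
  end.
Definition kpref c p : prel R := fun x y => (kf c p x <= kf c p y)%E.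

Lemma lyr (r : R) : (+oo <= r%:E)%E = false.
Proof. by rewrite leNgt ltry. Qed.
Lemma l0n : (0%R <= -oo :> \bar R)%E = false.
Proof. by rewrite leNgt ltNy0. Qed.

Lemma kf_ge0 (c p r : R) : 0 < c -> 0 <= kfr c p r.
Proof. by move=> c0; rewrite /kfr; case: ifP => h; [nra|move/negbT: h; rewrite -ltNge; lra]. Qed.

Lemma kpref_sp (c p : R) : 0 < c -> 0 <= p -> single_peaked (kpref c p) /\ peak (kpref c p) = [set p%:E].
Proof.
move=> c0 p0.
have kp : kfr c p p = 0 by rewrite /kfr lexx subrr mulr0.
have pk : peak (kpref c p) = [set p%:E].
  apply/seteqP; split => x /=.
    move=> [hx /(_ p%:E)]; rewrite /kpref /= kp => /(_ p0).
    case: x hx => [s||] //=; rewrite lee_fin => _.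
    rewrite /kfr; case: ifP => h1 h2; last by move/negbT: h1; rewrite -ltNge => h1; exfalso; lra.
    have -> : s = p by nra.
    by [].
  move=> ->; split; first by rewrite /cdom lee_fin.
  move=> y; rewrite /kpref /= kp.
  by case: y => [s||] //= _; rewrite lee_fin kf_ge0.
split=> //; split; last first.
  exists p%:E; split=> // x x' x'0 H.
  rewrite /strict /kpref /= !lee_fin.
  suff: kfr c p x < kfr c p x'.
    by move=> h; split; [exact: ltW|rewrite leNgt h].
  move: H; rewrite !lee_fin /kfr.
  case: (leP x p) => h1; case: (leP x' p) => h2; move=> [[a b]|[a b]]; nra.
split.
- by move=> x _; rewrite /kpref.
- by move=> x y _ _; rewrite /kpref; case: (leP (kf c p x) (kf c p y)) => h; [left|right; exact: ltW].
- by move=> x y z _ _ _ h1 h2; rewrite /kpref; exact: le_trans h1 h2.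
- move=> [r||] //= _.
  + set d := kfr c p r.
    have d0 : 0 <= d by exact: kf_ge0.
    set e := d / c.
    have de : d = c * e by rewrite /e mulrC divfK // gt_eqF.
    have -> : [set x | cdom x /\ kpref c p x r%:E] =
      [set x : \bar R | (0 <= x)%E] `&` [set x | ((p - e)%:E <= x)%E] `&` [set x | (x <= (p + d)%:E)%E].
      apply/seteqP; split => x /=; rewrite /cdom /kpref /=; case: x => [s||] //=;
        rewrite ?lee_fin ?leey ?le0y ?lyr ?l0n -/d ?(kfr_le _ _ _ _ _ c0 de d0);
        try by move=> [].
      * by move=> [s0 /andP[h1 h2]].
      * by move=> [[s0 h1] h2]; rewrite h1 h2.
    apply: closedI; first apply: closedI.
    * exact: closed_ereal_le_ereal.
    * exact: closed_ereal_le_ereal.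
    * exact: closed_ereal_ge_ereal.
  + have -> : [set x | cdom x /\ kpref c p x +oo%E] = [set x : \bar R | (0 <= x)%E].
      apply/seteqP; split => x /=; rewrite /kpref /= leey; first by case.
      by move=> h; split.

    exact: closed_ereal_le_ereal.
- move=> [r||] //= _.
  + set d := kfr c p r.
    have d0 : 0 <= d by exact: kf_ge0.
    set e := d / c.
    have de : d = c * e by rewrite /e mulrC divfK // gt_eqF.
    have -> : [set x | cdom x /\ kpref c p r%:E x] =
      [set x : \bar R | (0 <= x)%E] `&` ([set x | (x <= (p - e)%:E)%E] `|` [set x | ((p + d)%:E <= x)%E]).
      apply/seteqP; split => x /=; rewrite /cdom /kpref /=; case: x => [s||] //=;
        rewrite ?lee_fin ?leey ?le0y ?lyr ?l0n -/d ?(kfr_ge _ _ _ _ _ c0 de d0);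
        try by move=> [].
      * by move=> [s0 /orP h].
      * by move=> _; split => //; right.
      * by move=> [s0 h]; split => //; apply/orP.
    apply: closedI; first exact: closed_ereal_le_ereal.
    apply: closedU; [exact: closed_ereal_ge_ereal|exact: closed_ereal_le_ereal].
  + have -> : [set x | cdom x /\ kpref c p +oo%E x] = [set x : \bar R | (0 <= x)%E] `&` [set x | (+oo <= x)%E].
      apply/seteqP; split => x /=; rewrite /kpref /=; case: x => [s||] //=; rewrite ?leye_eq ?l0n //; by move=> [].
    apply: closedI; exact: closed_ereal_le_ereal.
Qed.

Lemma topp_peak : peak topp = [set +oo%E].
Proof.
apply/seteqP; split => x /=.
  by move=> [_ /(_ +oo%E le0y)]; rewrite /topp leye_eq => /eqP.
by move=> ->; split; [exact: le0y| move=> y _; exact: leey].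
Qed.

Lemma botp_peak : peak botp = [set 0%E].
Proof.
apply/seteqP; split => x /=.
  move=> [h0 /(_ 0%E (lexx _))]; rewrite /botp => h1.
  by apply/eqP; rewrite eq_le h1 h0.
by move=> ->; split; [exact: lexx| move=> y; rewrite /cdom /botp].
Qed.
End Prefs.
Arguments kfr {R}.
Arguments kpref_sp {R}.
Arguments kpref {R}.

Theorem lemma2 (R : realType) (n : nat) (phi : profile R n -> R -> 'I_n -> R) :
  is_rule phi -> own_peak_only phi -> peak_responsive phi -> NOM phi ->
  equal_division_guarantee phi.
Proof.
move=> Hrule Hopo Hpr Hnom Rp Om i HRp Om0 Hpk.
have n0 : (0 < n)%N by apply: leq_ltn_trans (leq0n i) (ltn_ord i).
have n0R : 0 < (n%:R : R) by rewrite ltr0n.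
set p := Om / n%:R.
have p0 : 0 < p by rewrite /p divr_gt0.
set x0 := phi Rp Om i.
suff -> : x0 = p.
  case: (HRp i) => [[Hrefl _ _ _ _] _].
  by split; apply: Hrefl; rewrite /cdom lee_fin ltW.
have SPupd : forall (Rp' : profile R n) Ri, (forall j, j != i -> single_peaked (Rp' j)) ->
    single_peaked Ri -> SPprofile (upd Rp' i Ri).
  move=> Rp' Ri H1 H2 j; rewrite /upd; case: eqP => [_|/eqP h] //; exact: H1.
have Hup : forall (Q : profile R n), SPprofile Q -> phi Q Om i <= Om.
  move=> Q HQ; have [Hn Hs] := Hrule Q Om HQ Om0.
  rewrite -{2}Hs (bigD1 i) //= lerDl; exact: sumr_ge0.
have Btop : forall (Rp' : profile R n), (forall j, j != i -> single_peaked (Rp' j)) ->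
    p <= phi (upd Rp' i (topp R)) Om i <= Om.
  move=> Rp' H; have HQ := SPupd Rp' _ H (topp_sp R).
  rewrite Hup // andbT.
  have [_ Hs] := Hrule _ Om HQ Om0.
  have le : forall j, phi (upd Rp' i (topp R)) Om j <= phi (upd Rp' i (topp R)) Om i.
    move=> j; case: (eqVneq j i) => [->//|ji].
    apply: Hpr => // a b _; rewrite {1}/upd eqxx topp_peak => -> /=; exact: leey.
  rewrite /p ler_pdivrMr // -{1}Hs.
  have := @ler_sum _ _ (index_enum (ordinal n)) xpredT _ _ (fun j _ => le j).
  by move/le_trans; apply; rewrite sumr_const card_ord mulr_natr.
have Bbot : forall (Rp' : profile R n), (forall j, j != i -> single_peaked (Rp' j)) ->
    0 <= phi (upd Rp' i (botp R)) Om i <= p.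
  move=> Rp' H; have HQ := SPupd Rp' _ H (botp_sp R).
  have [Hn Hs] := Hrule _ Om HQ Om0.
  rewrite Hn /=.
  have le : forall j, phi (upd Rp' i (botp R)) Om i <= phi (upd Rp' i (botp R)) Om j.
    move=> j; case: (eqVneq j i) => [->//|ji].
    apply: Hpr => //; first by rewrite eq_sym.
    by move=> a b; rewrite {1}/upd eqxx botp_peak => -> [].
  rewrite /p ler_pdivlMr // -{2}Hs.
  have := @ler_sum _ _ (index_enum (ordinal n)) xpredT _ _ (fun j _ => le j).
  by move=> h; apply: (le_trans _ h); rewrite sumr_const card_ord mulr_natr.
have HSPo : forall j, j != i -> single_peaked (Rp j) by move=> j _; exact: HRp.
have Hx0 : forall Ri, single_peaked Ri -> peak Ri = [set p%:E] -> phi (upd Rp i Ri) Om i = x0.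
  by move=> Ri H1 H2; rewrite /x0 (Hopo Rp Om i Ri) // H2 Hpk.
case: (ltgtP x0 p) => [lt|gt|//].
- pose c := (2 * Om) / (p - x0).
  have c0 : 0 < c by rewrite /c divr_gt0 ?subr_gt0 // mulr_gt0.
  have hc : c * (p - x0) = 2 * Om by rewrite /c divfK // subr_eq0 gt_eqF.
  have [sp pk] := kpref_sp _ _ c0 (ltW p0).
  have Hst : forall y, p <= y <= Om -> strict (kpref c p) y%:E x0%:E.
    move=> y /andP[y1 y2].
    suff h : kfr c p y < kfr c p x0.
      by rewrite /strict /kpref /= !lee_fin; split; [exact: ltW|rewrite leNgt h].
    rewrite /kfr; case: (leP y p) => h1; case: (leP x0 p) => h2; nra.
  exfalso; apply: (Hnom i (kpref c p) (topp R) Om sp (topp_sp R) Om0); split.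
    exists Rp; split=> //; rewrite (Hx0 (kpref c p)) //; apply: Hst; exact: Btop.
  move=> x' [Rp' [H1 ->]]; exists x0; last by apply: Hst; exact: Btop.
  by exists Rp; split=> //; rewrite Hx0.
- pose c := (x0 - p) / (2 * p).
  have c0 : 0 < c by rewrite /c divr_gt0 ?subr_gt0 // mulr_gt0.
  have hc : c * (2 * p) = x0 - p by rewrite /c divfK // gt_eqF // mulr_gt0.
  have [sp pk] := kpref_sp _ _ c0 (ltW p0).
  have Hst : forall y, 0 <= y <= p -> strict (kpref c p) y%:E x0%:E.
    move=> y /andP[y1 y2].
    suff h : kfr c p y < kfr c p x0.
      by rewrite /strict /kpref /= !lee_fin; split; [exact: ltW|rewrite leNgt h].
    rewrite /kfr; case: (leP y p) => h1; case: (leP x0 p) => h2; nra.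
  exfalso; apply: (Hnom i (kpref c p) (botp R) Om sp (botp_sp R) Om0); split.
    exists Rp; split=> //; rewrite (Hx0 (kpref c p)) //; apply: Hst; exact: Bbot.
  move=> x' [Rp' [H1 ->]]; exists x0; last by apply: Hst; exact: Bbot.
  by exists Rp; split=> //; rewrite Hx0.
Qed.
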